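(* Let $G=(V,E)$ be a transport graph with $n$ nodes and $m$ edges, incidence matrix $A\in\mathbb{R}^{m\times n}$, and positive node weights $g\in\mathbb{R}^n$. Let $F\in\mathbb{R}^m$ be a flow satisfying the capacity constraint $\sqrt{|A^T|F^2}\le g$, and let $u\in\mathbb{R}^n$. Then $$F^TAu\le g^T\sqrt{|A^T|(Au)^2}.$$
   Context: A transport graph is a graph with a distinguished source node $s$ and sink node $t$ together with edges linking some nodes to the source and some to the sink; $n$ and $m$ include these nodes and edges. Each edge $e_{ij}$ is oriented from $v_i$ to $v_j$; a flow is a vector $F\in\mathbb{R}^m$ indexed by edges. The incidence matrix $A$ has $A_{e_{ij},v_k}=+1$ if $k=i$, $-1$ if $k=j$, $0$ otherwise, so $(Au)_{e_{ij}}=u_i-u_j$; $|A|$ is the entrywise absolute value of $A$. For vectors, $v^2$ is the entrywise square, $\sqrt{v}$ the entrywise square root, and inequalities are entrywise. *)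

(* Defs.v *)
From mathcomp Require Import all_boot all_order all_algebra.
Set Implicit Arguments. Unset Strict Implicit. Unset Printing Implicit Defensive.
Import Order.TTheory GRing.Theory Num.Theory.
Local Open Scope ring_scope.

Definition incidence (R : ringType) (m n : nat) (src dst : 'I_m -> 'I_n)
  : 'M[R]_(m, n) :=
  \matrix_(e < m, k < n)
     (if k == src e then 1 else if k == dst e then -1 else 0).

Definition absmx (R : numDomainType) (p q : nat) (M : 'M[R]_(p, q)) : 'M[R]_(p, q) :=
  map_mx (fun x => `|x|) M.
Definition sqmx (R : ringType) (p q : nat) (M : 'M[R]_(p, q)) : 'M[R]_(p, q) :=
  map_mx (fun x => x ^+ 2) M.
Definition sqrtmx (R : rcfType) (p q : nat) (M : 'M[R]_(p, q)) : 'M[R]_(p, q) :=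
  map_mx (fun x => Num.sqrt x) M.

Definition transport_graph (m n : nat) (src dst : 'I_m -> 'I_n) (s t : 'I_n) : Prop :=
  s != t /\ (forall e, src e != dst e).

(* Main.v *)
Require Import Defs.
From mathcomp Require Import all_boot all_order all_algebra.
From mathcomp Require Import ring lra.
Import Order.TTheory GRing.Theory Num.Theory.
Local Open Scope ring_scope.

Lemma cs_aux (R : rcfType) (m : nat) (w x y : 'I_m -> R) (G : R) :
  (forall e, 0 <= w e) -> 0 < G ->
  \sum_e w e * x e ^+ 2 <= G ^+ 2 ->
  \sum_e w e * x e * y e <= G * Num.sqrt (\sum_e w e * y e ^+ 2).
Proof.
move=> w0 G0 HS.
have T0 : 0 <= \sum_e w e * y e ^+ 2.
  by apply: sumr_ge0 => e _; rewrite mulr_ge0 // sqr_ge0.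
set T := \sum_e _ in T0 *.
have [b0|bn0] := eqVneq (Num.sqrt T) 0.
  have T00 : T = 0 by move/eqP: b0; rewrite sqrtr_eq0 => HT; apply/eqP; rewrite eq_le HT T0.
  have := T00; rewrite /T => /eqP; rewrite psumr_eq0; last first.
    by move=> e _; rewrite mulr_ge0 // sqr_ge0.
  move/allP=> H; rewrite b0 mulr0 big1 // => e _.
  have := H e (mem_index_enum e); rewrite /= mulf_eq0 => /orP[/eqP->|];
    first by rewrite !mul0r.
  by rewrite sqrf_eq0 => /eqP->; rewrite mulr0.
set b := Num.sqrt T in bn0 *.
have bp : 0 < b by rewrite lt_neqAle eq_sym bn0 sqrtr_ge0.
have Tb : T = b ^+ 2 by rewrite sqr_sqrtr.
have H1 : (2 * G * b) * (\sum_e w e * x e * y e) <=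
          b ^+ 2 * (\sum_e w e * x e ^+ 2) + G ^+ 2 * T.
  rewrite /T !mulr_sumr -big_split /=; apply: ler_sum => e _.
  have := w0 e; have := sqr_ge0 (b * x e - G * y e); nra.
have : (2 * G * b) * (\sum_e w e * x e * y e) <= 2 * (G * b) ^+ 2.
  apply: (le_trans H1); rewrite Tb.
  have : b ^+ 2 * (\sum_e w e * x e ^+ 2) <= b ^+ 2 * G ^+ 2.
    by rewrite ler_wpM2l // sqr_ge0.
  lra.
have Gb : 0 < G * b by rewrite mulr_gt0.
nra.
Qed.

Theorem proposition2 (R : rcfType) (n m : nat) (src dst : 'I_m -> 'I_n)
  (s t : 'I_n) (g : 'cV[R]_n) (F : 'cV[R]_m) (u : 'cV[R]_n) :
  transport_graph src dst s t ->
  (forall k, 0 < g k 0) ->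
  (forall k, sqrtmx (absmx (incidence R src dst)^T *m sqmx F) k 0 <= g k 0) ->
  (F^T *m (incidence R src dst *m u)) 0 0
    <= (g^T *m sqrtmx (absmx (incidence R src dst)^T
                        *m sqmx (incidence R src dst *m u))) 0 0.
Proof.
move=> _ g0 Hcap.
set A := incidence R src dst in Hcap *.
set a := A *m u.
pose w (e : 'I_m) (k : 'I_n) := `|A e k|.
have w0 : forall e k, 0 <= w e k by move=> e k; rewrite normr_ge0.
have wsrc : forall e, w e (src e) = 1.
  by move=> e; rewrite /w /A /incidence mxE eqxx normr1.
clearbody a A. rewrite !mxE.
apply: (@le_trans _ _ (\sum_k \sum_e w e k * `|F e 0| * `|a e 0|)).
  rewrite exchange_big /=; apply: ler_sum => e _; rewrite mxE.
  rewrite (bigD1 (src e)) //= wsrc mul1r.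
  apply: (@le_trans _ _ (`|F e 0| * `|a e 0|)); first by rewrite -normrM ler_norm.
  apply: ler_wpDr.
  by apply: sumr_ge0 => k _; rewrite !mulr_ge0 ?normr_ge0.
  by [].
apply: ler_sum => k _; rewrite !mxE mulrC.
apply: (@le_trans _ _ (g k 0 * Num.sqrt (\sum_e w e k * `|a e 0| ^+ 2))); last first.
  rewrite [X in _ <= X]mulrC; apply: ler_wpM2l; first exact: ltW.
  rewrite ler_sqrt; last by apply: sumr_ge0 => e _; rewrite !mxE mulr_ge0 ?sqr_ge0.
  apply: ler_sum => e _; rewrite !mxE /w real_normK ?num_real //.
have HH := @cs_aux R m (fun e => w e k) (fun e => `|F e 0|) (fun e => `|a e 0|) (g k 0) (fun e => w0 e k) (g0 k). apply: HH.
have := Hcap k; rewrite !mxE => Hk.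
have S0 : 0 <= \sum_j (absmx A^T) k j * sqmx F j 0.
  by apply: sumr_ge0 => e _; rewrite !mxE mulr_ge0 ?normr_ge0 ?sqr_ge0.
have : \sum_j (absmx A^T) k j * sqmx F j 0 <= g k 0 ^+ 2.
  have Hk' : Num.sqrt (\sum_j (absmx A^T) k j * sqmx F j 0) <= g k 0.
    exact: Hk.
  have := sqr_sqrtr S0; have := sqrtr_ge0 (\sum_j (absmx A^T) k j * sqmx F j 0).
  move: Hk'; set q := Num.sqrt _; nra.
apply: le_trans; apply: ler_sum => e _; rewrite !mxE /w real_normK ?num_real //.
Qed.
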